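(* Let $p$ be an odd prime, $s$ a nonnegative integer, and $N,n$ positive integers with $\gcd(n,p)=1$. Then $$E_{np^N+s}\equiv E_{np^{N-1}+s}\pmod{p^N},$$ i.e. the difference lies in $p^N\mathbb Z_p$.
   Context: The Euler numbers $E_m$ are defined by $\frac{2}{e^t+1}=\sum_{m\ge0}E_m\frac{t^m}{m!}$. *)

(* Defs.v *)
From mathcomp Require Import all_boot all_order all_algebra.
Set Implicit Arguments. Unset Strict Implicit. Unset Printing Implicit Defensive.
Import Order.TTheory GRing.Theory Num.Theory.
Local Open Scope ring_scope.

(* Euler numbers E_m defined by 2/(e^t+1) = sum E_m t^m/m!.
   Multiplying by (e^t + 1) and comparing coefficients of t^m/m! gives
     sum_{k=0}^m C(m,k) E_k + E_m = 2 [m = 0],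
   i.e. E_0 = 1 and E_m = -(1/2) sum_{k<m} C(m,k) E_k for m >= 1. *)
Fixpoint euler_list (m : nat) : seq rat :=
  match m with
  | 0%N => [:: 1]
  | m'.+1 =>
      let l := euler_list m' in
      rcons l (- (1 / 2) * \sum_(k < m'.+1) ('C(m'.+1, k))%:R * nth 0 l k)
  end.

Definition euler (m : nat) : rat := nth 0 (euler_list m) m.

Definition in_pNZp (p N : nat) (x : rat) : Prop :=
  (p ^ N %| `|numq x|)%N /\ ~~ (p %| `|denq x|)%N.

(* Main.v *)
Require Import Defs.
From mathcomp Require Import all_boot all_order all_algebra all_fingroup all_solvable.
From mathcomp Require Import ring lra zify.
Import GRing.Theory Num.Theory.
Local Open Scope ring_scope.

Lemma size_euler_list m : size (euler_list m) = m.+1.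
Proof. by elim: m => [|m IH] //=; rewrite size_rcons IH. Qed.

Lemma nth_euler_list m k : (k <= m)%N -> nth 0 (euler_list m) k = euler k.
Proof.
elim: m => [|m IH]; first by rewrite leqn0 => /eqP ->.
rewrite leq_eqVlt => /orP [/eqP -> //|Hk].
by rewrite /= nth_rcons size_euler_list Hk IH.
Qed.

Lemma euler_rec m : euler m.+1 = - (1/2) * \sum_(k < m.+1) ('C(m.+1, k))%:R * euler k.
Proof.
rewrite /euler /= nth_rcons size_euler_list ltnn eqxx.
congr (_ * _); apply: eq_bigr => k _; by rewrite nth_euler_list // -ltnS.
Qed.

Lemma euler_rec2 m : \sum_(k < m.+1) ('C(m, k))%:R * euler k + euler m = 2 * (m == 0%N)%:R.
Proof.
case: m => [|m].
  rewrite big_ord_recr big_ord0 /euler /= bin0; ring.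
rewrite big_ord_recr /= binn euler_rec /=. field. by [].
Qed.
Definition T (M m : nat) : rat := \sum_(x < M) (-1)^+x * (x%:R)^+m.

Lemma tele M m : \sum_(x < M) (-1)^+x * ((x%:R + 1)^+m + (x%:R)^+m) = 0^+m - (-1)^+M * ((M%:R : rat))^+m.
Proof.
elim: M => [|M IH]; first by rewrite big_ord0 expr0 mul1r expr0n subrr.
rewrite big_ord_recr /= IH -addn1 natrD exprD expr1 /=. ring.
Qed.

Lemma Trec M m : odd M ->
  \sum_(k < m.+1) ('C(m,k))%:R * T M k + T M m = (m==0%N)%:R + (M%:R)^+m.
Proof.
move=> HM; rewrite /T.
rewrite (eq_bigr (fun k : 'I_m.+1 => \sum_(x < M) (('C(m,k))%:R : rat) * ((-1)^+x * (x%:R : rat)^+k))); last by move=> k _; rewrite mulr_sumr.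
rewrite exchange_big /= -big_split /=.
transitivity (\sum_(x < M) (-1)^+x * (((x%:R : rat) + 1)^+m + (x%:R)^+m)).
  apply: eq_bigr => x _; rewrite exprD1n mulrDr mulr_sumr; congr (_ + _).
  by apply: eq_bigr => k _; rewrite mulr_natl mulrnAr.
by rewrite tele -[(-1 : rat)^+M]signr_odd HM expr1 expr0n; ring.
Qed.
Definition Q (p k : nat) (x : rat) := exists (a : rat) (d : nat),
  a \is a Num.int /\ ~~ (p %| d)%N /\ x * d%:R = (p ^ k)%:R * a.

Section QS.
Variable p : nat.
Hypothesis pp : prime p.

Lemma Q_add k x y : Q p k x -> Q p k y -> Q p k (x + y).
Proof.
move=> [a1 [d1 [i1 [n1 e1]]]] [a2 [d2 [i2 [n2 e2]]]].
exists (a1 * d2%:R + a2 * d1%:R), (d1 * d2)%N; split.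
  by rewrite rpredD // rpredM // natr_int.
split; first by rewrite Euclid_dvdM // negb_or n1 n2.
rewrite natrM; transitivity (x * d1%:R * d2%:R + y * d2%:R * d1%:R); first ring.
rewrite e1 e2; ring.
Qed.

Lemma Q_mul k r x : Q p 0 r -> Q p k x -> Q p k (r * x).
Proof.
move=> [a1 [d1 [i1 [n1 e1]]]] [a2 [d2 [i2 [n2 e2]]]].
exists (a1 * a2), (d1 * d2)%N; split; first by rewrite rpredM.
split; first by rewrite Euclid_dvdM // negb_or n1 n2.
rewrite natrM; transitivity ((r * d1%:R) * (x * d2%:R)); first ring.
rewrite e1 e2 expn0 mul1r; ring.
Qed.

Lemma Q_int k a : a \is a Num.int -> Q p k ((p ^ k)%:R * a).
Proof.
move=> ia; exists a, 1%N; split=> //; split; last by rewrite mulr1.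
by rewrite dvdn1; case: (p =P 1%N) pp => // ->.
Qed.

Lemma Q_0 k : Q p k 0.
Proof. by rewrite -(mulr0 (p ^ k)%:R); apply: Q_int; rewrite rpred0. Qed.

Lemma Q_int0 a : a \is a Num.int -> Q p 0 a.
Proof. by move=> ia; have := @Q_int 0%N a ia; rewrite expn0 mul1r. Qed.

Lemma Q_opp k x : Q p k x -> Q p k (- x).
Proof. move=> h; rewrite -mulN1r; apply: Q_mul => //; apply: Q_int0; by rewrite rpredN rpred1. Qed.

Lemma Q_sub k x y : Q p k x -> Q p k y -> Q p k (x - y).
Proof. by move=> hx hy; apply: Q_add => //; apply: Q_opp. Qed.

Lemma Q_sum k n (F : 'I_n -> rat) : (forall i, Q p k (F i)) -> Q p k (\sum_(i < n) F i).
Proof.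
move=> h; elim/big_ind: _ => //; [exact: Q_0 | exact: Q_add].
Qed.

Lemma Q_dvd k c : (p ^ k %| c)%N -> Q p k c%:R.
Proof.
move=> /divnK <-; rewrite natrM mulrC; apply: Q_int; exact: natr_int.
Qed.

Lemma Q_half : odd p -> Q p 0 (1/2).
Proof.
move=> op; exists 1, 2%N; split; first exact: rpred1.
split; last by rewrite expn0 mul1r; field.
apply/negP => /dvdn_leq h; have := prime_gt1 pp.
have {}h := h isT; case: p op h => [|[|[|q]]] //.
Qed.

End QS.

Lemma D_Q p N m : prime p -> odd p ->
  Q p N (T (p ^ N) m - euler m).
Proof.
move=> pp op; set M := (p ^ N)%N.
have HM : odd M by rewrite /M oddX op orbT.
elim/ltn_ind: m => m IH.
have H : \sum_(k < m.+1) ('C(m,k))%:R * (T M k - euler k) + (T M m - euler m)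
          = (M%:R)^+m - (m == 0%N)%:R.
  under eq_bigr do rewrite mulrBr.
  rewrite sumrB; move: (@Trec M m HM) (euler_rec2 m) => h1 h2; lra.
rewrite big_ord_recr /= binn mul1r in H.
have -> : T M m - euler m = 1/2 * ((M%:R)^+m - (m == 0%N)%:R -
   \sum_(i < m) ('C(m, widen_ord (leqnSn m) i))%:R * (T M (widen_ord (leqnSn m) i) - euler (widen_ord (leqnSn m) i))).
  by rewrite -H; field.
eapply (Q_mul _ pp); first exact: (Q_half _ pp op).
eapply (Q_sub _ pp).
  case: m {IH H} => [|m]; first by rewrite expr0 subrr; eapply (Q_0 _ pp).
  rewrite /= subr0 exprS; eapply (Q_int _ pp); rewrite -natrX; exact: natr_int.
eapply (Q_sum _ pp) => i; eapply (Q_mul _ pp); first by eapply (Q_int0 _ pp); exact: natr_int.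
by apply: IH; rewrite /=.
Qed.

Lemma dvd_diff p N n s x : prime p -> (0 < N)%N -> (0 < n)%N ->
  (x ^ (n * p ^ N.-1 + s) <= x ^ (n * p ^ N + s))%N /\
  (p ^ N %| x ^ (n * p ^ N + s) - x ^ (n * p ^ N.-1 + s))%N.
Proof.
move=> pp N0 n0.
set b := (n * p ^ N.-1 + s)%N; set t := totient (p ^ N).
have p1 := prime_gt1 pp.
have ea : (n * p ^ N + s = b + n * t)%N.
  rewrite /t totient_pfactor // /b -{1}(prednK N0) expnS.
  have -> : p = p.-1.+1 by rewrite prednK // ltnW.
  rewrite /=; ring.
have Nb : (N <= b)%N.
  apply: (leq_trans _ (leq_addr _ _)); apply: (leq_trans _ (leq_pmull _ n0)).
  by move: (ltn_expl N.-1 p1); case: (N) N0.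
have b0 : (0 < b)%N by apply: leq_trans N0 Nb.
rewrite ea; case: x => [|x].
  by rewrite !exp0n // addn_gt0 b0.
split; first by apply: leq_pexp2l => //; apply: leq_addr.
case: (boolP (p %| x.+1)%N) => px.
  have hb : (p ^ N %| x.+1 ^ b)%N := dvdn_trans (dvdn_exp2l p Nb) (dvdn_exp2r b px).
  apply: dvdn_sub => //; rewrite expnD; exact: dvdn_mulr.
have cop : coprime x.+1 (p ^ N) by apply: coprimeXr; rewrite coprime_sym prime_coprime.
have HE := Euler_exp_totient cop.
rewrite (mulnC n t) expnD expnM -{2}(muln1 (x.+1 ^ b)%N) -mulnBr.
apply: dvdn_mull; rewrite -eqn_mod_dvd; last by rewrite expn_gt0 expn_gt0.
by rewrite -modnXm -/t HE modnXm exp1n.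
Qed.

Lemma Q_in p N y : prime p -> Q p N y -> in_pNZp p N y.
Proof.
move=> pp [a [d [ia [nd e]]]]; case/intrP: ia => z ez; subst a.
have e2 : ((numq y * d%:Z)%:~R : rat) = ((p ^ N)%:Z * z * denq y)%:~R.
  have hd : ((Posz d)%:~R : rat) = d%:R by []. have hP : ((Posz (p ^ N)%N)%:~R : rat) = (p ^ N)%:R by []. rewrite !intrM numqE hd hP.
  transitivity (y * d%:R * (denq y)%:~R); first ring.
  rewrite e; ring.
have e3 : (`|numq y| * d = p ^ N * `|z| * `|denq y|)%N.
  by have := congr1 absz (intr_inj e2); rewrite !abszM !absz_nat.
have cop : coprime (p ^ N) d by apply: coprimeXl; rewrite prime_coprime.
split; first by rewrite -(Gauss_dvdl _ cop) e3 -mulnA dvdn_mulr.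
apply/negP => hp.
have : (`|denq y| %| `|numq y| * d)%N by rewrite e3 dvdn_mull.
rewrite Gauss_dvdr; last by rewrite coprime_sym coprime_num_den.
by move=> hd; move/negP: nd; apply; apply: dvdn_trans hd.
Qed.

Theorem corollary5p2 (p s N n : nat) :
  prime p -> odd p -> (0 < N)%N -> (0 < n)%N -> coprime n p ->
  in_pNZp p N (euler (n * p ^ N + s) - euler (n * p ^ N.-1 + s)).
Proof.
move=> pp op N0 n0 _; eapply (Q_in _ _ _ pp).
set a := (n * p ^ N + s)%N; set b := (n * p ^ N.-1 + s)%N.
have -> : euler a - euler b = (T (p ^ N) a - T (p ^ N) b)
   - (T (p ^ N) a - euler a) + (T (p ^ N) b - euler b) by ring.
eapply (Q_add _ pp); last exact: D_Q.
eapply (Q_sub _ pp); last exact: D_Q.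
rewrite /T -sumrB; eapply (Q_sum _ pp) => i.
rewrite -mulrBr; eapply (Q_mul _ pp).
  by eapply (Q_int0 _ pp); rewrite rpredX // rpredN rpred1.
have [le dv] := dvd_diff p N n s i pp N0 n0.
rewrite -!natrX -natrB //; exact: (Q_dvd _ pp).
Qed.
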